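(* Let $H$ be a Hilbert space of finite dimension $m$ and $n\ge 1$ an integer. Call a POVM $\{\Pi_p,\Pi_m,\Pi_?\}$ on $H^{\otimes n}$ (positive operators with $\Pi_p+\Pi_m+\Pi_?=I$) an unambiguous discrimination between pure and mixed states if (i) $\mathrm{Tr}(\Pi_p\rho^{\otimes n})=0$ for every mixed state $\rho$ on $H$ (density operator that is not a rank-one projector), and (ii) $\langle\psi|^{\otimes n}\Pi_m|\psi\rangle^{\otimes n}=0$ for every unit vector $|\psi\rangle\in H$. Define its efficiency $$p=\int_{\rho\ \text{mixed}}\mathrm{Tr}(\rho^{\otimes n}\Pi_m)\,\eta(\rho)\,d\rho+\int_{\rho\ \text{pure}}\mathrm{Tr}(\rho^{\otimes n}\Pi_p)\,\eta(\rho)\,d\rho .$$ Then the POVM $$\Pi_p=0,\qquad \Pi_m=\Phi(H^{\otimes n}_{asym}),\qquad \Pi_?=\Phi(H^{\otimes n}_{sym})$$ is an unambiguous discrimination between pure and mixed states, and it has the maximum efficiency among all unambiguous discriminations between pure and mixed states (i.e., it is the optimal unambiguous discrimination).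
   Context: $H^{\otimes n}_{sym}$ denotes the symmetric subspace of $H^{\otimes n}$ (the vectors invariant under all permutations of the $n$ tensor factors, equivalently the span of all $|\psi\rangle^{\otimes n}$, $|\psi\rangle\in H$), and $H^{\otimes n}_{asym}$ denotes its orthogonal complement in $H^{\otimes n}$. $\Phi(K)$ denotes the orthogonal projector onto a subspace $K$. A purity function $\mu$ on density operators satisfies $\mu(U\rho U^\dagger)=\mu(\rho)$ for all unitaries $U$, $\mu(\rho)=1$ iff $\rho$ is pure, and $0\le\mu(\rho)<1$ otherwise; ''pure'' thus means $\mu(\rho)=1$ and ''mixed'' means $\mu(\rho)<1$. The prior is given by a nonnegative density $\eta$ with respect to a measure $d\rho$ on the set of density operators on $H$, with $\eta(U\rho U^\dagger)=\eta(\rho)$ for all unitaries $U$. *)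

(* Defs.v *)
From HB Require Import structures.
From mathcomp Require Import all_boot all_order all_algebra all_fingroup.
From mathcomp Require Import complex.
From mathcomp Require Import all_classical all_reals all_analysis.
From mathcomp Require Export spectral.
Import Order.TTheory GRing.Theory Num.Theory.
Local Open Scope ring_scope.
Local Open Scope classical_set_scope.

Section QDefs.
Context {R : realType}.
Local Notation C := (R[i]).

Definition adj {p q} (A : 'M[C]_(p, q)) : 'M[C]_(q, p) := (map_mx Num.conj A)^T.

Definition psd {k} (A : 'M[C]_k) : Prop :=
  forall v : 'cV[C]_k, 0 <= (adj v *m A *m v) 0 0.

Definition unitvec {k} (v : 'cV[C]_k) : Prop := (adj v *m v) 0 0 = 1.

Definition density {m} (rho : 'M[C]_m) : Prop := psd rho /\ \tr rho = 1.

Definition pure {m} (rho : 'M[C]_m) : Prop :=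
  exists psi : 'cV[C]_m, unitvec psi /\ rho = psi *m adj psi.

Definition mixed {m} (rho : 'M[C]_m) : Prop := density rho /\ ~ pure rho.

(* H^{(x) n} = C^{#|tidx m n|}, with product basis indexed by the
   functions 'I_n -> 'I_m (one index per tensor factor). *)
Definition tidx (m n : nat) := {ffun 'I_n -> 'I_m}.
Definition tdim (m n : nat) := #|{: tidx m n}|.

Definition tpow {m} n (rho : 'M[C]_m) : 'M[C]_(tdim m n) :=
  \matrix_(a, b) \prod_(k < n)
     rho ((enum_val a : tidx m n) k) ((enum_val b : tidx m n) k).

Definition tpowv {m} n (psi : 'cV[C]_m) : 'cV[C]_(tdim m n) :=
  \col_a \prod_(k < n) psi ((enum_val a : tidx m n) k) 0.

Definition permv {m n} (s : 'S_n) (v : 'cV[C]_(tdim m n)) : 'cV[C]_(tdim m n) :=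
  \col_a v (enum_rank [ffun k => (enum_val a : tidx m n) (s k)]) 0.

Definition sym_space m n : set 'cV[C]_(tdim m n) :=
  [set v | forall s : 'S_n, permv s v = v].

Definition asym_space m n : set 'cV[C]_(tdim m n) :=
  [set v | forall w, sym_space m n w -> (adj w *m v) 0 0 = 0].

Definition orth_proj {k} (P : 'M[C]_k) (K : set 'cV[C]_k) : Prop :=
  [/\ P *m P = P, adj P = P & forall v, K v <-> P *m v = v].

Definition povm {k} (Pp Pm Pq : 'M[C]_k) : Prop :=
  [/\ psd Pp, psd Pm, psd Pq & Pp + Pm + Pq = 1%:M].

Definition unamb {m} n (Pp Pm Pq : 'M[C]_(tdim m n)) : Prop :=
  [/\ povm Pp Pm Pq,
      (forall rho : 'M[C]_m, mixed rho -> \tr (Pp *m tpow n rho) = 0) &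
      (forall psi : 'cV[C]_m, unitvec psi ->
          (adj (tpowv n psi) *m Pm *m tpowv n psi) 0 0 = 0)].

(* efficiency; the prior measure on density operators is eta(rho) d rho,
   with d rho the image of the measure mu under st : X -> density operators *)
Definition efficiency {m} n {d} {X : measurableType d} (mu : {measure set X -> \bar R})
  (st : X -> 'M[C]_m) (eta : 'M[C]_m -> R) (Pp Pm : 'M[C]_(tdim m n)) : \bar R :=
  (\int[mu]_(x in [set x | mixed (st x)])
      (complex.Re (\tr (tpow n (st x) *m Pm)) * eta (st x))%:E
   + \int[mu]_(x in [set x | density (st x) /\ pure (st x)])
      (complex.Re (\tr (tpow n (st x) *m Pp)) * eta (st x))%:E)%E.

End QDefs.

(* Main.v *)
Require Import Defs.
From HB Require Import structures.
From mathcomp Require Import all_boot all_order all_algebra all_fingroup.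
From mathcomp Require Import complex.
From mathcomp Require Import all_classical all_reals all_analysis.
From mathcomp Require Import spectral ring.
Import Order.TTheory GRing.Theory Num.Theory.
Local Open Scope ring_scope.
Section Main.
Variable R : realType.
Local Notation C := (R[i]).
Local Open Scope sesquilinear_scope.

Lemma adjE p q (A : 'M[C]_(p, q)) i j : adj A i j = (A j i)^*.
Proof. by rewrite !mxE. Qed.

Lemma adj_mul p q r (A : 'M[C]_(p, q)) (B : 'M[C]_(q, r)) :
  adj (A *m B) = adj B *m adj A.
Proof.
apply/matrixP => i j; rewrite !mxE rmorph_sum; apply: eq_bigr => k _.
by rewrite !mxE rmorphM mulrC.
Qed.

Lemma adjK p q (A : 'M[C]_(p, q)) : adj (adj A) = A.
Proof. by apply/matrixP => i j; rewrite !mxE conjCK. Qed.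

Lemma adjD p q (A B : 'M[C]_(p, q)) : adj (A + B) = adj A + adj B.
Proof. by apply/matrixP => i j; rewrite !mxE rmorphD. Qed.

Lemma adjN p q (A : 'M[C]_(p, q)) : adj (- A) = - adj A.
Proof. by apply/matrixP => i j; rewrite !mxE rmorphN. Qed.

Lemma adjB p q (A B : 'M[C]_(p, q)) : adj (A - B) = adj A - adj B.
Proof. by rewrite adjD adjN. Qed.

Lemma adjZ p q c (A : 'M[C]_(p, q)) : adj (c *: A) = c^* *: adj A.
Proof. by apply/matrixP => i j; rewrite !mxE rmorphM. Qed.

Lemma adj0 p q : adj (0 : 'M[C]_(p, q)) = 0.
Proof. by apply/matrixP => i j; rewrite !mxE rmorph0. Qed.

Lemma adj1 p : adj (1%:M : 'M[C]_p) = 1%:M.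
Proof. by apply/matrixP => i j; rewrite !mxE eq_sym rmorph_nat. Qed.

Lemma adj_sum p q (I : finType) (F : I -> 'M[C]_(p, q)) :
  adj (\sum_i F i) = \sum_i adj (F i).
Proof.
apply/matrixP => i j; rewrite adjE !summxE rmorph_sum.
by apply: eq_bigr => k _; rewrite adjE.
Qed.

Lemma adj_tstar p q (A : 'M[C]_(p, q)) : adj A = A ^t* .
Proof. by apply/matrixP => i j; rewrite !mxE. Qed.

Lemma mx_ext p q (A B : 'M[C]_(p, q)) :
  (forall v : 'cV[C]_q, A *m v = B *m v) -> A = B.
Proof.
move=> H; apply/matrixP => i j.
have /matrixP /(_ i 0) := H (delta_mx j 0).
rewrite !mxE (bigD1 j) //= [in RHS](bigD1 j) //= !mxE !eqxx !mulr1.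
rewrite !big1 ?addr0 // => k /negbTE kj; by rewrite !mxE kj mulr0.
Qed.

Lemma vec_ext q (u : 'cV[C]_q) :
  (forall y : 'cV[C]_q, (adj y *m u) 0 0 = 0) -> u = 0.
Proof.
move=> H; apply/matrixP => i j; rewrite (ord1 j) mxE.
have := H (delta_mx i 0); rewrite !mxE (bigD1 i) //= !mxE !eqxx conjC1 mul1r.
rewrite big1 ?addr0 // => k /negbTE ki; by rewrite !mxE ki conjC0 mul0r.
Qed.

Lemma adj_1x1 (A : 'M[C]_1) : adj A 0 0 = (A 0 0)^*.
Proof. by rewrite adjE. Qed.

Lemma norm2_ge0 q (u : 'cV[C]_q) : 0 <= (adj u *m u) 0 0.
Proof.
rewrite mxE; apply: sumr_ge0 => i _; rewrite !mxE mulrC; exact: mul_conjC_ge0.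
Qed.


Lemma cjD (a b : C) : (a + b)^* = a^* + b^*. Proof. exact: rmorphD. Qed.
Lemma cjM (a b : C) : (a * b)^* = a^* * b^*. Proof. exact: rmorphM. Qed.
Lemma cjN (a : C) : (- a)^* = - a^*. Proof. exact: rmorphN. Qed.

Definition bf {k} (A : 'M[C]_k) (y u : 'cV[C]_k) := (adj y *m A *m u) 0 0.

Lemma mx11_mul p (A : 'M[C]_(1, p)) (B : 'M[C]_(p, 1)) (c : 'M[C]_1) :
  (A *m B *m c) 0 0 = (A *m B) 0 0 * c 0 0.
Proof. by rewrite [in LHS]mxE big_ord1. Qed.

Lemma bf_expand {k} (A : 'M[C]_k) u y c :
  bf A (u + c *: y) (u + c *: y) =
  bf A u u + c^* * c * bf A y y + c * bf A u y + c^* * bf A y u.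
Proof.
rewrite /bf adjD adjZ !mulmxDl !mulmxDr -!scalemxAl -!scalemxAr !mxE.
rewrite ?scalerA; idtac; ring.
Qed.

Lemma psd_herm {k} {A : 'M[C]_k} : psd A -> adj A = A.
Proof.
move=> HA.
have real_q : forall v, (bf A v v)^* = bf A v v.
  by move=> v; apply: geC0_conj; apply: HA.
have key : forall u y, bf A u y = (bf A y u)^*.
  move=> u y.
  have E1 := real_q (u + 1 *: y); rewrite bf_expand conjC1 !mul1r in E1.
  rewrite !cjD !real_q in E1.
  have E2 := real_q (u + 'i *: y); rewrite bf_expand in E2.
  rewrite !cjD !cjM conjCK !real_q conjCi in E2.
  set x := bf A u y in E1 E2 *; set z := bf A y u in E1 E2 *.
  have E1' : x + z = x^* + z^*.
    by apply: (@addrI _ (bf A u u + bf A y y)); rewrite !addrA E1.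
  have E2' : 'i * (x - z) = 'i * (z^* - x^*).
    apply: (@addrI _ (bf A u u + - 'i * 'i * bf A y y)).
    transitivity (bf A u u + - 'i * 'i * bf A y y + 'i * x + - 'i * z); first by ring.
    rewrite -E2; ring.
  have E3 : x - z = z^* - x^*.
    by apply: (mulfI _ E2'); rewrite neq0Ci.
  apply: (@mulfI _ 2%:R); first by rewrite pnatr_eq0.
  transitivity ((x + z) + (x - z)); first by ring.
  rewrite E1' E3; ring.
have H : forall (a b : 'I_k), (adj (delta_mx a 0 : 'cV[C]_k) *m A *m (delta_mx b 0 : 'cV[C]_k)) 0 0 = A a b.
move=> a b; rewrite !mxE (bigD1 b) //= big1 ?addr0; last first.
  by move=> l /negbTE lb; rewrite !mxE lb mulr0.
rewrite !mxE eqxx mulr1 (bigD1 a) //= big1 ?addr0; last first.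
  by move=> l /negbTE la; rewrite !mxE la conjC0 mul0r.
  by rewrite !mxE !eqxx conjC1 mul1r.
apply/matrixP => i j; rewrite adjE.
have K := key (delta_mx i 0) (delta_mx j 0); rewrite /bf !H in K.
by rewrite K.
Qed.


Lemma rowcolE p q r s (X : 'M[C]_(p, q)) (Y : 'M[C]_(q, r)) (Z : 'M[C]_(r, s)) i j :
  (row i X *m Y *m col j Z) 0 0 = (X *m Y *m Z) i j.
Proof. by rewrite -row_mul !mxE; apply: eq_bigr => k _; rewrite !mxE. Qed.

Lemma adj_col p q (X : 'M[C]_(p, q)) j : adj (col j X) = row j (adj X).
Proof. by apply/matrixP => a b; rewrite !mxE. Qed.

Lemma mul_conjC_ge0' (x : C) : 0 <= x^* * x.
Proof. by rewrite mulrC mul_conjC_ge0. Qed.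

Lemma psd_decomp {k} {A : 'M[C]_k} : psd A ->
  exists (w : 'I_k -> C) (v : 'I_k -> 'cV[C]_k),
    (forall j, 0 <= w j) /\ A = \sum_j w j *: (v j *m adj (v j)).
Proof.
move=> HA; have Ah := psd_herm HA.
have An : A \is normalmx by apply/normalmxP; rewrite -adj_tstar Ah.
have AE := orthomx_spectralP An.
move: AE; set P := spectralmx A; set sp := spectral_diag A => AE.
have PU : P \is unitarymx := spectral_unitarymx A.
rewrite invmx_unitary // -adj_tstar in AE.
have PP : P *m adj P = 1%:M by rewrite adj_tstar; apply/unitarymxP.
exists (fun j => sp 0 j), (fun j => col j (adj P)); split.
  move=> j; have := HA (col j (adj P)).
  rewrite adj_col adjK rowcolE AE !mulmxA PP mul1mx -mulmxA PP mulmx1.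
  by rewrite !mxE eqxx mulr1n.
rewrite {1}AE; apply/matrixP => a b; rewrite mul_mx_diag summxE !mxE.
apply: eq_bigr => j _; rewrite !mxE big_ord1 !mxE conjCK; ring.
Qed.

Lemma qf_sum {k} (I : finType) (w : I -> C) (v : I -> 'cV[C]_k) (u : 'cV[C]_k) :
  bf (\sum_j w j *: (v j *m adj (v j))) u u =
  \sum_j w j * (((adj (v j) *m u) 0 0)^* * (adj (v j) *m u) 0 0).
Proof.
rewrite /bf mulmx_sumr mulmx_suml summxE; apply: eq_bigr => j _.
rewrite -scalemxAr -scalemxAl mxE; congr (_ * _).
rewrite !mulmxA -(mulmxA (adj u *m v j)) [in LHS]mxE big_ord1; congr (_ * _).
by rewrite -adj_1x1 adj_mul adjK.
Qed.

Lemma psd_sum {k} (I : finType) (w : I -> C) (v : I -> 'cV[C]_k) :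
  (forall j, 0 <= w j) -> psd (\sum_j w j *: (v j *m adj (v j))).
Proof.
move=> w0 u; rewrite -/(bf _ u u) qf_sum; apply: sumr_ge0 => j _.
by apply: mulr_ge0 => //; rewrite mulrC mul_conjC_ge0.
Qed.

Lemma psd_qf {k} {A : 'M[C]_k} {u} : psd A -> 0 <= bf A u u.
Proof. by move=> H; apply: H. Qed.

Lemma psd_kernel {k} {A : 'M[C]_k} {u} : psd A -> bf A u u = 0 -> A *m u = 0.
Proof.
move=> HA; have [w [v [w0 ->]]] := psd_decomp HA.
rewrite qf_sum => /psumr_eq0P H.
have H' : forall j, w j * (adj (v j) *m u) 0 0 = 0.
  move=> j; have /(_ j isT) /eqP := H (fun i _ => mulr_ge0 (w0 i) (mul_conjC_ge0' _)).
  rewrite mulf_eq0 => /orP[/eqP->|]; first by rewrite mul0r.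
  by rewrite mulf_eq0 conjC_eq0 orbb => /eqP->; rewrite mulr0.
rewrite mulmx_suml; apply: big1 => j _.
rewrite -scalemxAl -mulmxA; apply/matrixP => a b.
rewrite (ord1 b) [LHS]mxE [X in _ * X]mxE big_ord1 [RHS]mxE.
by rewrite mulrCA H' mulr0.
Qed.

Lemma psd_kernel_l {k} {A : 'M[C]_k} {u} : psd A -> bf A u u = 0 -> adj u *m A = 0.
Proof.
move=> HA /(psd_kernel HA) H.
by rewrite -(psd_herm HA) -adj_mul H adj0.
Qed.


Definition Uvec {m} n {I : finType} (v : I -> 'cV[C]_m) (f : {ffun 'I_n -> I})
  : 'cV[C]_(tdim m n) :=
  \col_a \prod_(k < n) v (f k) ((enum_val a : tidx m n) k) 0.

Lemma cj_prod (I : finType) (F : I -> C) : (\prod_i F i)^* = \prod_i (F i)^*.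
Proof. exact: rmorph_prod. Qed.

Lemma tpow_decomp {m} n (I : finType) (w : I -> C) (v : I -> 'cV[C]_m) :
  tpow n (\sum_j w j *: (v j *m adj (v j))) =
  \sum_(f : {ffun 'I_n -> I}) (\prod_k w (f k)) *: (Uvec n v f *m adj (Uvec n v f)).
Proof.
apply/matrixP => a b; rewrite mxE summxE.
under eq_bigr do rewrite summxE.
rewrite bigA_distr_bigA; apply: eq_bigr => f _.
rewrite !mxE big_ord1 !mxE cj_prod -!big_split; apply: eq_bigr => k _.
by rewrite /= [LHS]mxE [X in _ * X]mxE big_ord1 adjE.
Qed.

Lemma tpow_rank1 {m} n (psi : 'cV[C]_m) :
  tpow n (psi *m adj psi) = tpowv n psi *m adj (tpowv n psi).
Proof.
apply/matrixP => a b; rewrite !mxE big_ord1 !mxE cj_prod -big_split.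
by apply: eq_bigr => k _; rewrite !mxE big_ord1 !mxE.
Qed.

Lemma tr11 (M : 'M[C]_1) : \tr M = M 0 0.
Proof. by rewrite /mxtrace big_ord1. Qed.

Lemma tr_rank1 p (u : 'cV[C]_p) (Q : 'M[C]_p) :
  \tr (u *m adj u *m Q) = bf Q u u.
Proof. by rewrite -mulmxA mxtrace_mulC tr11. Qed.

Lemma tr_rank1' p (u : 'cV[C]_p) (Q : 'M[C]_p) :
  \tr (Q *m (u *m adj u)) = bf Q u u.
Proof. by rewrite mxtrace_mulC tr_rank1. Qed.

Lemma tr_sum p (I : finType) (W : I -> C) (U : I -> 'cV[C]_p) (Q : 'M[C]_p) :
  \tr ((\sum_f W f *: (U f *m adj (U f))) *m Q) = \sum_f W f * bf Q (U f) (U f).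
Proof.
rewrite mulmx_suml raddf_sum /=; apply: eq_bigr => f _.
by rewrite -scalemxAl mxtraceZ tr_rank1.
Qed.

Lemma tr_sum' p (I : finType) (W : I -> C) (U : I -> 'cV[C]_p) (Q : 'M[C]_p) :
  \tr (Q *m (\sum_f W f *: (U f *m adj (U f)))) = \sum_f W f * bf Q (U f) (U f).
Proof. by rewrite mxtrace_mulC tr_sum. Qed.

Lemma tpowv_sym m n (psi : 'cV[C]_m) : sym_space (R:=R) m n (tpowv n psi).
Proof.
move=> s; apply/matrixP => a j; rewrite !mxE enum_rankK.
rewrite [RHS](reindex_inj (@perm_inj _ s)) /=.
by apply: eq_bigr => k _; rewrite ffunE.
Qed.

Lemma orth_proj_in {k} {P : 'M[C]_k} {K} v : orth_proj P K -> K (P *m v).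
Proof. by case=> PP _ HK; apply/HK; rewrite mulmxA PP. Qed.

Lemma orth_proj_psd k (P : 'M[C]_k) K : orth_proj P K -> psd P.
Proof.
case=> PP Ph _ v; rewrite -PP -{1}Ph mulmxA -adj_mul -mulmxA.
exact: norm2_ge0.
Qed.

Lemma adj_proj {k} {P : 'M[C]_k} {K} (y : 'cV[C]_k) : orth_proj P K -> adj y *m P = adj (P *m y).
Proof. by case=> _ Ph _; rewrite adj_mul Ph. Qed.

Section Proj.
Variables m n : nat.
Variables Psym Pasym : 'M[C]_(tdim m n).
Hypothesis Hs : orth_proj Psym (sym_space (R:=R) m n).
Hypothesis Ha : orth_proj Pasym (asym_space (R:=R) m n).

Lemma Pasym_sym s : sym_space (R:=R) m n s -> Pasym *m s = 0.
Proof.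
move=> ss; apply: vec_ext => y.
rewrite mulmxA (adj_proj _ Ha) -[adj _ *m s]adjK adj_mul adjK adj_1x1.
have := orth_proj_in y Ha => /(_ s ss) ->; exact: conjC0.
Qed.

Lemma Pasym_sym_l s : sym_space (R:=R) m n s -> adj s *m Pasym = 0.
Proof. by move=> ss; rewrite (adj_proj _ Ha) Pasym_sym // adj0. Qed.

Lemma Psym_Pasym : Psym + Pasym = 1%:M.
Proof.
apply: mx_ext => v; rewrite mul1mx mulmxDl.
have ss := orth_proj_in v Hs.
have ar : asym_space (R:=R) m n (v - Psym *m v).
  move=> w ws; rewrite mulmxBr mulmxA (adj_proj _ Hs).
  by have [_ _ /(_ w) [/(_ ws) ->]] := Hs; rewrite subrr mxE.
have [_ _ /(_ (v - Psym *m v)) [/(_ ar) E _]] := Ha.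
have -> : Pasym *m v = Pasym *m (Psym *m v + (v - Psym *m v)).
  by rewrite addrCA subrr addr0.
by rewrite mulmxDr E Pasym_sym // add0r addrC subrK.
Qed.

End Proj.

Section Symm.
Variables m n : nat.
Local Notation N := (tdim m n).

Definition sigma (s : 'S_n) (a : 'I_N) : 'I_N :=
  enum_rank [ffun k => (enum_val a : tidx m n) (s k)].

Lemma sigmaM s t a : sigma s (sigma t a) = sigma (s * t)%g a.
Proof.
rewrite /sigma enum_rankK; congr enum_rank; apply/ffunP => k.
by rewrite !ffunE permM.
Qed.

Lemma sigma1 a : sigma 1%g a = a.
Proof.
rewrite /sigma -[RHS]enum_valK; congr enum_rank; apply/ffunP => k.
by rewrite ffunE perm1.
Qed.

Definition Ms (s : 'S_n) : 'M[C]_N := \matrix_(a, b) ((sigma s a == b)%:R).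

Lemma permvE s (v : 'cV[C]_N) : permv s v = Ms s *m v.
Proof.
apply/matrixP => a j; rewrite (ord1 j) !mxE (bigD1 (sigma s a)) //= !mxE eqxx mul1r.
rewrite big1 ?addr0 // => b /negbTE bs; rewrite !mxE eq_sym bs mul0r //.
Qed.

Lemma permv_comp s t (v : 'cV[C]_N) : permv t (permv s v) = permv (s * t)%g v.
Proof. by apply/matrixP => a j; rewrite !mxE; congr (v _ _); exact: (sigmaM s t a). Qed.

Definition cn : C := (n`!%:R)^-1.

Definition Psym0 : 'M[C]_N := cn *: \sum_(s : 'S_n) Ms s.

Lemma Psym0E (v : 'cV[C]_N) : Psym0 *m v = cn *: \sum_(s : 'S_n) permv s v.
Proof.
rewrite -scalemxAl mulmx_suml; congr (_ *: _); apply: eq_bigr => s _.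
by rewrite permvE.
Qed.

Lemma sym_Psym0 (v : 'cV[C]_N) : sym_space (R:=R) m n (Psym0 *m v).
Proof.
move=> t; rewrite Psym0E permvE -scalemxAr mulmx_sumr; congr (_ *: _).
under eq_bigr do rewrite -permvE permv_comp.
by rewrite [RHS](reindex_inj (mulIg t)).
Qed.

Lemma cn_nat : cn * (n`!)%:R = 1.
Proof. by rewrite mulVf // pnatr_eq0 -lt0n fact_gt0. Qed.

Lemma Psym0_fix (v : 'cV[C]_N) : sym_space (R:=R) m n v -> Psym0 *m v = v.
Proof.
move=> sv; rewrite Psym0E.
under eq_bigr do rewrite sv.
by rewrite sumr_const card_Sn -scaler_nat scalerA cn_nat scale1r.
Qed.

Lemma sigmaV s a b : (sigma s b == a) = (sigma s^-1 a == b).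
Proof.
apply/eqP/eqP => <-.
  by rewrite sigmaM mulVg sigma1.
by rewrite sigmaM mulgV sigma1.
Qed.

Lemma adj_Psym0 : adj Psym0 = Psym0.
Proof.
rewrite /Psym0 adjZ adj_sum geC0_conj; last by rewrite invr_ge0 ler0n.
congr (_ *: _); rewrite [RHS](reindex_inj invg_inj) /=; apply: eq_bigr => s _.
apply/matrixP => a b; rewrite !mxE -sigmaV; exact: rmorph_nat.
Qed.

Lemma orth_Psym0 : orth_proj Psym0 (sym_space (R:=R) m n).
Proof.
split.
- apply: mx_ext => v; rewrite -mulmxA; apply: Psym0_fix; exact: sym_Psym0.
- exact: adj_Psym0.
- move=> v; split; first exact: Psym0_fix.
  by move=> <-; apply: sym_Psym0.
Qed.

Lemma orth_Pasym0 : orth_proj (1%:M - Psym0) (asym_space (R:=R) m n).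
Proof.
have [PP Ph Hs] := orth_Psym0.
split.
- by rewrite mulmxBl !mulmxBr !mul1mx mulmx1 PP subrr subr0.
- by rewrite adjB adj1 Ph.
- move=> v; rewrite mulmxBl mul1mx; split.
    move=> av; suff -> : Psym0 *m v = 0 by rewrite subr0.
    apply: vec_ext => y; rewrite mulmxA (adj_proj y orth_Psym0).
    by apply: av; apply: sym_Psym0.
  move=> E w /Hs ws.
  have P0 : Psym0 *m v = 0.
    by apply: oppr_inj; apply: (@addrI _ v); rewrite E oppr0 addr0.
  by rewrite -ws -(adj_proj w orth_Psym0) -mulmxA P0 mulmx0 mxE.
Qed.

End Symm.

Lemma digits_uniq {B : nat} {M} {c d : nat -> nat} : (0 < B)%N ->
  (forall j, c j < B)%N -> (forall j, d j < B)%N ->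
  (\sum_(j < M) c j * B ^ j = \sum_(j < M) d j * B ^ j)%N ->
  forall j, (j < M)%N -> c j = d j.
Proof.
move=> B0; elim: M c d => [|M IH] c d cB dB; first by [].
rewrite !big_ord_recl /= !expn0 !muln1.
have sh : forall f : nat -> nat,
    (\sum_(i < M) f (lift ord0 i) * B ^ lift ord0 i =
     (\sum_(i < M) f i.+1 * B ^ i) * B)%N.
  move=> f; rewrite big_distrl /=; apply: eq_bigr => i _.
  by rewrite /= expnS mulnCA mulnC.
rewrite !sh => E.
have E0 : c 0%N = d 0%N.
  have := congr1 (modn^~ B) E; rewrite ![(_ + _ * B)%N]addnC !modnMDl.
  by rewrite !modn_small.
have E1 : (\sum_(i < M) c i.+1 * B ^ i = \sum_(i < M) d i.+1 * B ^ i)%N.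
  have := congr1 (divn^~ B) E; rewrite ![(_ + _ * B)%N]addnC !divnMDl //.
  by rewrite !divn_small // !addn0.
case=> [|j] //= jM.
exact: (IH (fun i => c i.+1) (fun i => d i.+1)).
Qed.

Lemma sum_pow_count (B m : nat) (s : seq 'I_m) :
  (\sum_(x <- s) B ^ x = \sum_(j < m) count (fun y : 'I_m => y == j) s * B ^ j)%N.
Proof.
elim: s => [|x s IH]; first by rewrite big_nil big1.
rewrite big_cons IH /=.
rewrite [RHS](eq_bigr (fun j => (x == j) * B ^ j + count (fun y : 'I_m => y == j) s * B ^ j)%N); last first.
  by move=> j _; rewrite mulnDl.
rewrite big_split /=; congr (_ + _)%N.
rewrite (bigD1 x) //= eqxx mul1n big1 ?addn0 // => j /negbTE jx.
by rewrite eq_sym jx.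
Qed.

Definition kron {m n} (a : {ffun 'I_n -> 'I_m}) : nat := (\sum_(k < n) n.+1 ^ a k)%N.

Lemma kron_count {m n} (a : {ffun 'I_n -> 'I_m}) :
  kron a = (\sum_(j < m) count (fun y : 'I_m => y == j) [tuple a k | k < n] * n.+1 ^ j)%N.
Proof.
rewrite -sum_pow_count big_tuple /kron; apply: eq_bigr => k _.
by rewrite tnth_mktuple.
Qed.

Lemma kron_inj {m n} (a b : {ffun 'I_n -> 'I_m}) :
  kron a = kron b -> exists s : 'S_n, forall k, b k = a (s k).
Proof.
rewrite !kron_count => E.
pose c (t : n.-tuple 'I_m) j := count (fun y : 'I_m => (y : nat) == j) t.
have cB : forall t j, (c t j < n.+1)%N.
  by move=> t j; rewrite ltnS (leq_trans (count_size _ _)) // size_tuple.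
have Hc : forall (t : n.-tuple 'I_m) (j : 'I_m), count (fun y : 'I_m => y == j) t = c t j.
  by move=> t j; apply: eq_count => y.
have E' : (\sum_(j < m) c [tuple a k | k < n] j * n.+1 ^ j =
           \sum_(j < m) c [tuple b k | k < n] j * n.+1 ^ j)%N.
  transitivity (\sum_(j < m) count (fun y : 'I_m => y == j) [tuple a k | k < n] * n.+1 ^ j)%N.
    by apply: eq_bigr => j _; rewrite Hc.
  by rewrite E; apply: eq_bigr => j _; rewrite Hc.
have D := digits_uniq (ltn0Sn n) (cB _) (cB _) E'.
have P : perm_eq [tuple b k | k < n] [tuple a k | k < n].
  apply/allP => x _; apply/eqP; rewrite !Hc; apply/esym/D; exact: ltn_ord.
have [s Hs] := tuple_permP P; exists s => k.
have := congr1 (fun t => nth (a k) t k) Hs.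
by rewrite -!tnth_nth !tnth_mktuple.
Qed.

Lemma norm2_eq0 q (u : 'cV[C]_q) : (adj u *m u) 0 0 = 0 -> u = 0.
Proof.
rewrite mxE => E.
have G : forall k : 'I_q, true -> 0 <= adj u 0 k * u k 0.
  by move=> k _; rewrite adjE mul_conjC_ge0'.
have H := psumr_eq0P G E.
apply/matrixP => i j; rewrite (ord1 j) [RHS]mxE.
by have /(_ isT) /eqP := H i; rewrite adjE mulf_eq0 conjC_eq0 orbb => /eqP.
Qed.

Lemma tpowvZ m n c (psi : 'cV[C]_m) : tpowv n (c *: psi) = c ^+ n *: tpowv n psi.
Proof.
apply/matrixP => a j; rewrite !mxE.
under eq_bigr do rewrite mxE.
by rewrite big_split /= prodr_const card_ord.
Qed.

Lemma bfZ k (A : 'M[C]_k) d u : bf A (d *: u) (d *: u) = d^* * d * bf A u u.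
Proof.
by rewrite /bf adjZ -!scalemxAl -scalemxAr [LHS]mxE [X in _ * X]mxE mulrA.
Qed.

Lemma unit_tpow m n (P : 'M[C]_(tdim m n)) :
  (forall psi : 'cV[C]_m, unitvec psi -> bf P (tpowv n psi) (tpowv n psi) = 0) ->
  forall psi : 'cV[C]_m, psi != 0 -> bf P (tpowv n psi) (tpowv n psi) = 0.
Proof.
move=> H psi psi0.
set nu := (adj psi *m psi) 0 0.
have nu0 : nu != 0 by apply: contra psi0 => /eqP /norm2_eq0 ->.
have nuge : 0 <= nu by apply: norm2_ge0.
set c := sqrtC (nu^-1).
have cge : 0 <= c by rewrite sqrtC_ge0 invr_ge0.
have cc : c * c = nu^-1 by rewrite -expr2 sqrtCK.
have cj : c^* = c by apply: geC0_conj.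
have c0 : c != 0.
  apply/eqP => c0'; move: cc; rewrite c0' mul0r => /esym/eqP.
  by rewrite invr_eq0 (negbTE nu0).
have U : unitvec (c *: psi).
  rewrite /unitvec adjZ -scalemxAl -scalemxAr [LHS]mxE [X in _ * X]mxE -/nu cj mulrA cc.
  by rewrite mulVf.
have := H _ U; rewrite tpowvZ bfZ => /eqP; rewrite mulf_eq0 => /orP[|/eqP //].
by rewrite mulf_eq0 conjC_eq0 orbb expf_eq0 (negbTE c0) andbF.
Qed.

Definition kv m n (t : C) : 'cV[C]_m := \col_(j < m) t ^+ (n.+1 ^ j).

Lemma tpowv_kv m n t i : tpowv n (kv m n t) i 0 = t ^+ kron (enum_val i : tidx m n).
Proof.
rewrite mxE; under eq_bigr do rewrite mxE.
by rewrite prodrXr.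
Qed.

Lemma kv_neq0 m n (t : C) : (0 < m)%N -> t != 0 -> kv m n t != 0.
Proof.
move=> m0 t0; apply/eqP => /matrixP /(_ (Ordinal m0) 0); rewrite !mxE /= expn0 expr1.
by move/eqP; rewrite (negbTE t0).
Qed.

Lemma kron_lt m n (a : tidx m n) : (kron a < (n * n.+1 ^ m).+1)%N.
Proof.
rewrite ltnS /kron -[X in (_ <= X * _)%N]card_ord -sum_nat_const.
apply: leq_sum => k _; rewrite leq_pexp2l //; exact: ltnW.
Qed.

Lemma sym_kron m n (s : 'cV[C]_(tdim m n)) i i0 :
  sym_space (R:=R) m n s -> kron (enum_val i0 : tidx m n) = kron (enum_val i : tidx m n) ->
  s i 0 = s i0 0.
Proof.
move=> ss /kron_inj [sg Hsg].
have := ss sg; move/matrixP/(_ i0 0); rewrite mxE => <-.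
congr (s _ 0); rewrite -[LHS]enum_valK; congr enum_rank.
by apply/ffunP => k; rewrite ffunE Hsg.
Qed.

Lemma Pm_kill m n (Pm : 'M[C]_(tdim m n)) : (0 < m)%N -> psd Pm ->
  (forall psi : 'cV[C]_m, unitvec psi -> bf Pm (tpowv n psi) (tpowv n psi) = 0) ->
  forall s, sym_space (R:=R) m n s -> Pm *m s = 0.
Proof.
move=> m0 Ppsd H s ss.
have K : forall t : C, t != 0 -> Pm *m tpowv n (kv m n t) = 0.
  move=> t t0; apply: (psd_kernel Ppsd); apply: (unit_tpow _ _ _ H).
  exact: kv_neq0.
apply/matrixP => r j; rewrite (ord1 j) mxE [RHS]mxE.
pose p : {poly C} := \sum_i Pm r i *: 'X^(kron (enum_val i : tidx m n)).
have ev : forall t : C, t != 0 -> p.[t] = 0.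
  move=> t t0; have /matrixP /(_ r 0) := K t t0; rewrite !mxE => <-.
  rewrite horner_sum; apply: eq_bigr => i _.
  by rewrite hornerZ hornerXn tpowv_kv.
have p0 : p = 0.
  apply/eqP; apply: contraT => pn0.
  have := @max_poly_roots _ p (mkseq (fun k => (k.+1)%:R) (size p)) pn0.
  rewrite size_mkseq ltnn; apply.
    apply/allP => x /mapP [k _ ->]; apply/rootP; apply: ev.
    by rewrite pnatr_eq0.
  rewrite map_inj_uniq ?iota_uniq // => x y /eqP; rewrite eqr_nat eqSS.
  by move/eqP.
have cf0 : forall E, \sum_(i | kron (enum_val i : tidx m n) == E) Pm r i = 0.
  move=> E; transitivity (p`_E); last by rewrite p0 coef0.
  rewrite [LHS]big_mkcond coef_sum /=; apply: eq_bigr => i _.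
  rewrite coefZ coefXn eq_sym; case: eqP => _; by rewrite ?mulr1 ?mulr0.
rewrite (partition_big (fun i : 'I_(tdim m n) =>
          (inord (kron (enum_val i : tidx m n)) : 'I_(n * n.+1 ^ m).+1)) xpredT) //=.
apply: big1 => E _.
case: (pickP (fun i : 'I_(tdim m n) => inord (kron (enum_val i : tidx m n)) == E)) => [i0 Hi0|none]; last first.
  by rewrite big_pred0.
have eqk : forall i : 'I_(tdim m n), (inord (kron (enum_val i : tidx m n)) == E :> 'I_(n * n.+1 ^ m).+1)
     = (kron (enum_val i : tidx m n) == kron (enum_val i0 : tidx m n)).
  move=> i; move/eqP: Hi0 => <-; apply/eqP/eqP => [/(congr1 (@nat_of_ord _))|->] //.
  by rewrite !inordK ?kron_lt.
under eq_bigr => i.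
  rewrite eqk => /eqP Hi.
  rewrite (sym_kron _ _ _ _ _ ss (esym Hi)).
  over.
by rewrite -mulr_suml (eq_bigl _ _ eqk) cf0 mul0r.
Qed.

Lemma mx11_scalar (A : 'M[C]_1) : A = (A 0 0)%:M.
Proof. by apply/matrixP => i j; rewrite !ord1 !mxE eqxx mulr1n. Qed.

Lemma unit1 m (psi : 'cV[C]_m) : unitvec psi -> adj psi *m psi = 1%:M.
Proof. by move=> U; rewrite [LHS]mx11_scalar U. Qed.

Definition vfam {m} (psi : 'cV[C]_m) (j : 'I_m.+1) : 'cV[C]_m :=
  if unlift ord0 j is Some j' then delta_mx j' ord0 else psi.

Lemma sum_delta m : \sum_(j < m) (delta_mx j ord0 : 'cV[C]_m) *m adj (delta_mx j ord0) = 1%:M.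
Proof.
apply/matrixP => a b; rewrite summxE (bigD1 a) //= big1 ?addr0.
  rewrite !mxE big_ord1 !mxE !eqxx /= mul1r andbT eq_sym; exact: rmorph_nat.
move=> j /negbTE ja; rewrite !mxE big_ord1 !mxE eq_sym ja /= mul0r //.
Qed.

Lemma sigma_decomp {m} (psi : 'cV[C]_m) (c : C) :
  c *: (psi *m adj psi + 1%:M) = \sum_(j < m.+1) c *: (vfam psi j *m adj (vfam psi j)).
Proof.
rewrite big_ord_recl /vfam unlift_none scalerDr; congr (_ + _).
rewrite -sum_delta scaler_sumr; apply: eq_bigr => j _; by rewrite liftK.
Qed.

Lemma trace_rank1 p (u : 'cV[C]_p) : \tr (u *m adj u) = (adj u *m u) 0 0.
Proof. by rewrite mxtrace_mulC tr11. Qed.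

Lemma Pp_pure m n (Pp : 'M[C]_(tdim m n)) : (1 < m)%N -> psd Pp ->
  (forall rho : 'M[C]_m, mixed rho -> \tr (Pp *m tpow n rho) = 0) ->
  forall psi : 'cV[C]_m, unitvec psi -> bf Pp (tpowv n psi) (tpowv n psi) = 0.
Proof.
move=> m1 Ppsd H psi U.
set c : C := ((m.+1)%:R)^-1.
have c0 : c != 0 by rewrite invr_eq0 pnatr_eq0.
have cge : 0 <= c by rewrite invr_ge0 ler0n.
set sg := c *: (psi *m adj psi + 1%:M).
have sgE := sigma_decomp psi c.
have Hmix : mixed sg.
  split; first split.
  - by rewrite /sg sgE; apply: psd_sum.
  - rewrite /sg mxtraceZ mxtraceD trace_rank1 U mxtrace1.
    by rewrite addrC natr1 /c mulVf // pnatr_eq0.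
  - case=> chi [Uc E].
    have idem : sg *m sg = sg.
      by rewrite E mulmxA -(mulmxA chi) unit1 // mulmx1.
    have sgpsi : sg *m psi = (c * 2%:R) *: psi.
      rewrite /sg -scalemxAl mulmxDl -mulmxA unit1 // mulmx1 mul1mx -scalerA.
      by rewrite scaler_nat mulr2n.
    have := congr1 (mulmx^~ psi) idem; rewrite -mulmxA sgpsi -scalemxAr sgpsi.
    rewrite scalerA => /(congr1 (mulmx (adj psi))); rewrite -!scalemxAr unit1 //.
    move/matrixP/(_ 0 0); rewrite !mxE eqxx !mulr1 => /eqP.
    move=> /eqP E2.
    have d0 : c * 2%:R != 0 by rewrite mulf_neq0 // pnatr_eq0.
    have d1 : c * 2%:R = 1 by apply: (mulfI d0); rewrite mulr1.
    have := congr1 (fun x => m.+1%:R * x) d1; rewrite /c mulrA mulfV ?pnatr_eq0 //.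
    rewrite mul1r mulr1 => /eqP; rewrite eqr_nat => /eqP [] m1'.
    by rewrite -m1' in m1.
have := H _ Hmix; rewrite /sg sgE tpow_decomp tr_sum' => E.
pose f0 : {ffun 'I_n -> 'I_m.+1} := [ffun => ord0].
have Hge : forall f : {ffun 'I_n -> 'I_m.+1}, true ->
    0 <= (\prod_(k < n) c) * bf Pp (Uvec n (vfam psi) f) (Uvec n (vfam psi) f).
  by move=> f _; apply: mulr_ge0; [apply: prodr_ge0 | apply: psd_qf].
have /eqP := psumr_eq0P Hge E (i := f0) isT.
rewrite mulf_eq0 prodr_const expf_eq0 (negbTE c0) andbF /= => /eqP.
have -> : Uvec n (vfam psi) f0 = tpowv n psi.
  apply/matrixP => a j; rewrite !mxE; apply: eq_bigr => k _.
  by rewrite ffunE /vfam unlift_none.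
by [].
Qed.

Lemma Re_mono (x y : C) : x <= y -> complex.Re x <= complex.Re y.
Proof. by rewrite lecE => /andP[_ ->]. Qed.

Lemma key_ineq m n (Psym Pasym Pp Pm Pq : 'M[C]_(tdim m n)) :
  (0 < m)%N ->
  orth_proj Psym (sym_space (R:=R) m n) -> orth_proj Pasym (asym_space (R:=R) m n) ->
  unamb n Pp Pm Pq -> forall u, 0 <= bf Pm u u <= bf Pasym u u.
Proof.
move=> m0 Hs Ha [[pPp pPm pPq Hsum'] Hmix Hpure] u.
apply/andP; split; first exact: psd_qf.
have Hsum := Psym_Pasym _ _ _ _ Hs Ha.
set s := Psym *m u; set w := Pasym *m u.
have uE : u = s + w by rewrite /s /w -mulmxDl Hsum mul1mx.
have ss : sym_space (R:=R) m n s := orth_proj_in u Hs.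
have wa : asym_space (R:=R) m n w := orth_proj_in u Ha.
have Pms : Pm *m s = 0 := Pm_kill _ _ _ m0 pPm Hpure _ ss.
have sPm : adj s *m Pm = 0 by rewrite -(psd_herm pPm) -adj_mul Pms adj0.
have E1 : bf Pm u u = bf Pm w w.
  rewrite /bf {1 2}uE adjD mulmxDl sPm add0r mulmxDr -mulmxA Pms mulmx0 add0r.
  by [].
have E2 : bf Pasym u u = (adj w *m w) 0 0.
  rewrite /bf -mulmxA -/w {1}uE adjD mulmxDl mxE [X in X + _](wa s ss) add0r.
  by [].
rewrite E1 E2.
have : (adj w *m w) 0 0 = bf Pp w w + bf Pm w w + bf Pq w w.
  rewrite -[X in (adj w *m X)]mul1mx -Hsum' /bf mulmxA !mulmxDr !mulmxDl.
  by rewrite [LHS]mxE [X in X + _ = _]mxE.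
move=> ->; rewrite -addrA addrC -addrA lerDl.
by apply: addr_ge0; apply: psd_qf.
Qed.

Lemma trace_ineq m n (Psym Pasym Pp Pm Pq : 'M[C]_(tdim m n)) (rho : 'M[C]_m) :
  (0 < m)%N ->
  orth_proj Psym (sym_space (R:=R) m n) -> orth_proj Pasym (asym_space (R:=R) m n) ->
  unamb n Pp Pm Pq -> psd rho ->
  0 <= complex.Re (\tr (tpow n rho *m Pm)) <= complex.Re (\tr (tpow n rho *m Pasym)).
Proof.
move=> m0 Hs Ha Hu prho.
have [w [v [w0 ->]]] := psd_decomp prho.
rewrite tpow_decomp !tr_sum.
have W0 : forall f : {ffun 'I_n -> 'I_m}, 0 <= \prod_k w (f k).
  by move=> f; apply: prodr_ge0 => k _; exact: w0.
apply/andP; split.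
  have H0 : (0 : C) <= \sum_(f : {ffun 'I_n -> 'I_m}) (\prod_(k < n) w (f k)) * bf Pm (Uvec n v f) (Uvec n v f).
    apply: sumr_ge0 => f _.
    apply: mulr_ge0 => //; by have /andP[] := key_ineq _ _ _ _ _ _ _ m0 Hs Ha Hu (Uvec n v f).
  by apply: (le_trans _ (Re_mono _ _ H0)); rewrite /= lexx.
apply: Re_mono; apply: ler_sum => f _; apply: ler_wpM2l => //.
by have /andP[] := key_ineq _ _ _ _ _ _ _ m0 Hs Ha Hu (Uvec n v f).
Qed.
End Main.
Arguments orth_proj_psd {R k P K}.
Arguments Psym_Pasym {R m n Psym Pasym}.
Arguments Pasym_sym_l {R m n Pasym} _ {s}.
Arguments tpowv_sym {R m n}.
Arguments Pp_pure {R m n Pp}.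
Arguments trace_ineq {R m n Psym Pasym Pp Pm Pq rho}.

Theorem theorem1 (R : realType) (m n : nat) (Hm : (1 < m)%N) (Hn : (0 < n)%N)
  (d : measure_display) (X : measurableType d) (mu : {measure set X -> \bar R})
  (st : X -> 'M[R[i]]_m) (Hst : forall x, density (st x))
  (eta : 'M[R[i]]_m -> R)
  (Heta0 : forall rho, density rho -> 0 <= eta rho)
  (HetaU : forall (U rho : 'M[R[i]]_m), U \is unitarymx -> density rho ->
             eta (U *m rho *m adj U) = eta rho) :
  (exists P, orth_proj P (sym_space (R:=R) m n)) /\
  (exists P, orth_proj P (asym_space (R:=R) m n)) /\
  forall Psym Pasym : 'M[R[i]]_(tdim m n),
    orth_proj Psym (sym_space (R:=R) m n) -> orth_proj Pasym (asym_space (R:=R) m n) ->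
    unamb n 0 Pasym Psym /\
    (forall Pp Pm Pq : 'M[R[i]]_(tdim m n), unamb n Pp Pm Pq ->
       (efficiency n mu st eta Pp Pm <= efficiency n mu st eta 0 Pasym)%E).
Proof.
split; first by exists (Psym0 R m n); exact: orth_Psym0.
split; first by exists (1%:M - Psym0 R m n); exact: orth_Pasym0.
move=> Psym Pasym Hs Ha.
have m0 : (0 < m)%N by apply: ltnW.
split.
  split; [split| |].
  - by move=> v; rewrite mulmx0 mul0mx mxE.
  - exact: orth_proj_psd Ha.
  - exact: orth_proj_psd Hs.
  - by rewrite add0r addrC (Psym_Pasym Hs Ha).
  - by move=> rho _; rewrite mul0mx mxtrace0.
  - move=> psi _.
    by rewrite (Pasym_sym_l Ha (tpowv_sym psi)) mul0mx mxE.
move=> Pp Pm Pq Hu.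
have [[pPp pPm pPq _] Hmix _] := Hu.
rewrite /efficiency.
have I2a : (\int[mu]_(x in [set x | density (st x) /\ pure (st x)])
    (complex.Re (\tr (tpow n (st x) *m Pp)) * eta (st x))%:E = 0)%E.
  apply: integral0_eq => x [_ [chi [Uc ->]]].
  by rewrite tpow_rank1 tr_rank1 (Pp_pure Hm pPp Hmix chi Uc) /= mul0r.
have I2b : (\int[mu]_(x in [set x | density (st x) /\ pure (st x)])
    (complex.Re (\tr (tpow n (st x) *m 0)) * eta (st x))%:E = 0)%E.
  apply: integral0_eq => x _.
  by rewrite mulmx0 mxtrace0 /= mul0r.
rewrite I2a I2b !adde0.
have PT : forall x, mixed (st x) ->
    0 <= complex.Re (\tr (tpow n (st x) *m Pm)) <= complex.Re (\tr (tpow n (st x) *m Pasym)).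
  by move=> x [[px _] _]; apply: (trace_ineq m0 Hs Ha Hu px).
rewrite !ge0_integralE; first last.
- move=> x /= Mx; rewrite lee_fin; apply: mulr_ge0; last by apply: Heta0; case: Mx.
  by have /andP[] := PT x Mx.
- move=> x /= Mx; rewrite lee_fin; apply: mulr_ge0; last by apply: Heta0; case: Mx.
  have /andP[H1 H2] := PT x Mx; exact: le_trans H1 H2.
apply: le_ereal_sup => _ [h Hh <-]; exists h => //= x.
apply: le_trans (Hh x) _.
rewrite /patch; case: ifP => // /set_mem Mx.
rewrite lee_fin; apply: ler_wpM2r; first by apply: Heta0; case: Mx.
by have /andP[] := PT x Mx.
Qed.
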